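(* Let $f:\mathbb{F}_q^k\to\mathrm{Im}(f)$ with $|\mathrm{Im}(f)|\ge2$ be $d_d$-locally binary, where $d_d\ge1$, and suppose there exists a linear MDS $[n,k,d_d]$ code over $\mathbb{F}_q$ (so $d_d=n-k+1$). Then $r_f(k:d_d,d_d+1)=d_d$.
   Context: $d(\cdot,\cdot)$ is Hamming distance. $B_f(u,\rho)=\{f(u'):d(u,u')\le\rho\}$; $f$ is $\rho$-locally binary if $|B_f(u,\rho)|\le2$ for all $u$. For integers $0\le d_d\le d_f$, an $(f\!:d_d,d_f)$-FCC with redundancy $r$ is a systematic encoding $\mathfrak{C}_f(u)=(u,p_u)\in\mathbb{F}_q^{k+r}$ with $d(\mathfrak{C}_f(u_1),\mathfrak{C}_f(u_2))\ge d_d$ whenever $u_1\ne u_2$ and $\ge d_f$ whenever $f(u_1)\ne f(u_2)$; $r_f(k:d_d,d_f)$ is the minimum such $r$. *)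

(* Defs.v *)
From HB Require Import structures.
From mathcomp Require Import all_boot all_order all_algebra.
Set Implicit Arguments. Unset Strict Implicit. Unset Printing Implicit Defensive.
Import GRing.Theory.
Local Open Scope ring_scope.

Definition hamming (F : finFieldType) (m : nat) (x y : 'rV[F]_m) : nat :=
  #|[set i : 'I_m | x 0 i != y 0 i]|.

Definition hweight (F : finFieldType) (m : nat) (x : 'rV[F]_m) : nat :=
  #|[set i : 'I_m | x 0 i != 0]|.

Definition im_f (F : finFieldType) (k : nat) (Y : eqType)
  (f : 'rV[F]_k -> Y) : seq Y := undup [seq f u | u <- enum [set: 'rV[F]_k]].

Definition ball_f (F : finFieldType) (k : nat) (Y : eqType)
  (f : 'rV[F]_k -> Y) (u : 'rV[F]_k) (rho : nat) : seq Y :=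
  undup [seq f u' | u' <- enum [set u' : 'rV[F]_k | (hamming u u' <= rho)%N]].

Definition locally_binary (F : finFieldType) (k : nat) (Y : eqType)
  (f : 'rV[F]_k -> Y) (rho : nat) : Prop :=
  forall u, (size (ball_f f u rho) <= 2)%N.

Definition is_FCC (F : finFieldType) (k r : nat) (Y : eqType)
  (f : 'rV[F]_k -> Y) (dd df : nat) (p : 'rV[F]_k -> 'rV[F]_r) : Prop :=
  (forall u1 u2, u1 != u2 ->
     (dd <= hamming (row_mx u1 (p u1)) (row_mx u2 (p u2)))%N) /\
  (forall u1 u2, f u1 != f u2 ->
     (df <= hamming (row_mx u1 (p u1)) (row_mx u2 (p u2)))%N).

Definition FCC_exists (F : finFieldType) (k : nat) (Y : eqType)
  (f : 'rV[F]_k -> Y) (dd df r : nat) : Prop :=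
  exists p : 'rV[F]_k -> 'rV[F]_r, is_FCC f dd df p.

(* r_f(k : dd, df) = r, i.e. r is the minimum redundancy of such an FCC. *)
Definition optimal_redundancy (F : finFieldType) (k : nat) (Y : eqType)
  (f : 'rV[F]_k -> Y) (dd df r : nat) : Prop :=
  FCC_exists f dd df r /\ (forall r', FCC_exists f dd df r' -> (r <= r')%N).

(* The linear code generated by G : 'M_(k,n) is an [n,k,d] code:
   G has full row rank k and the minimum distance
   (= minimum weight of a nonzero codeword) is exactly d. *)
Definition linear_code_nkd (F : finFieldType) (n k d : nat)
  (G : 'M[F]_(k, n)) : Prop :=
  row_free G /\
  (forall c : 'rV[F]_n, (c <= G)%MS -> c != 0 -> (d <= hweight c)%N) /\
  (exists c : 'rV[F]_n, [/\ (c <= G)%MS, c != 0 & hweight c = d]).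

Definition linear_MDS_code (F : finFieldType) (n k d : nat)
  (G : 'M[F]_(k, n)) : Prop :=
  @linear_code_nkd F n k d G /\ (n + 1 = k + d)%N.

(* Main.v *)
Require Import Defs.
From mathcomp Require Import all_boot all_order all_algebra.
Set Implicit Arguments. Unset Strict Implicit. Unset Printing Implicit Defensive.
Import GRing.Theory.
Local Open Scope ring_scope.

Section Bip.
Variables (T : finType) (Y : eqType) (f : T -> Y) (e : rel T).
Hypothesis esym : symmetric e.
Hypothesis ediff : forall u v, e u v -> f u != f v.
Hypothesis enb : forall v u w, e v u -> e v w -> f u = f w.

Lemma path_val x p : path e x p ->
  f (last x p) = (if odd (size p) then f (head x p) else f x).
Proof.
elim: p x => [|z p IH] x //= /andP [exz pz].
rewrite (IH z pz).
case: p IH pz => [|y p] IH pz //=.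
case: (odd (size p)) => //=.
move: pz => /= /andP [ezy _].
by apply: (enb ezy); rewrite esym.
Qed.

Lemma conn_val r w : connect e r w ->
  f w = f r \/ exists h, e r h /\ f w = f h.
Proof.
move=> /connectP [p pp ->]; rewrite (path_val pp).
case: p pp => [|h p] /=; first by left.
move=> /andP [erh _]; case: (odd (size p)); [left | right; exists h] => //.
Qed.

Definition bcol u := f u == f (fingraph.root e u).

Lemma bcol_diff u v : e u v -> bcol u != bcol v.
Proof.
move=> euv; have cs := sym_connect_sym esym.
have ruv : fingraph.root e u = fingraph.root e v.
  by apply/(fingraph.rootP cs); apply: connect1.
rewrite /bcol -ruv; set r := fingraph.root e u.
have cu : connect e r u by rewrite cs connect_root.
have cv : connect e r v by rewrite cs /r ruv connect_root.
move: (ediff euv).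
case: (conn_val cu) => [->|[h1 [e1 ->]]]; case: (conn_val cv) => [->|[h2 [e2 ->]]].
- by rewrite eqxx.
- by rewrite eqxx (eq_sym (f h2)) (negbTE (ediff e2)).
- by rewrite eqxx (eq_sym (f h1)) (negbTE (ediff e1)).
- by rewrite (enb e1 e2) eqxx.
Qed.
End Bip.

Lemma hamming_sum (F : finFieldType) m (x y : 'rV[F]_m) :
  hamming x y = (\sum_(i < m) (x ord0 i != y ord0 i : nat))%N.
Proof.
rewrite /hamming -sum1dep_card big_mkcond /=.
by apply: eq_bigr => i _; case: (x ord0 i != y ord0 i).
Qed.

Lemma hamming_row_mx (F : finFieldType) m1 m2 (a a' : 'rV[F]_m1) (b b' : 'rV[F]_m2) :
  (hamming (row_mx a b) (row_mx a' b') = hamming a a' + hamming b b')%N.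
Proof.
rewrite !hamming_sum big_split_ord /=.
by congr (_ + _); apply: eq_bigr => i _; rewrite ?row_mxEl ?row_mxEr.
Qed.

Lemma hamming_le (F : finFieldType) m (x y : 'rV[F]_m) : (hamming x y <= m)%N.
Proof. by rewrite /hamming; apply: leq_trans (max_card _) _; rewrite card_ord. Qed.

Lemma hamming_weight (F : finFieldType) m (x y : 'rV[F]_m) :
  hamming x y = hweight (x - y).
Proof.
rewrite /hamming /hweight; apply: eq_card => i.
by rewrite !inE !mxE subr_eq0.
Qed.

Lemma hamming_sym (F : finFieldType) m (x y : 'rV[F]_m) : hamming x y = hamming y x.
Proof. by rewrite /hamming; apply: eq_card => i; rewrite !inE eq_sym. Qed.
Lemma hamming_xx (F : finFieldType) m (x : 'rV[F]_m) : hamming x x = 0%N.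
Proof. by rewrite hamming_sum big1 // => i _; rewrite eqxx. Qed.

Lemma im_two (F : finFieldType) k (Y : eqType) (f : 'rV[F]_k -> Y) :
  (2 <= size (im_f f))%N -> exists a b, f a != f b.
Proof.
rewrite /im_f; have := undup_uniq [seq f u | u <- enum [set: 'rV[F]_k]].
have mem y : y \in undup [seq f u | u <- enum [set: 'rV[F]_k]] -> exists u, y = f u.
  by rewrite mem_undup => /mapP [u _ ->]; exists u.
case: (undup _) mem => [|y1 [|y2 s]] mem //= /andP [ny _] _; move: ny.
have [u1 ->] := mem y1 (mem_head _ _).
have [u2 ->] : exists u, y2 = f u by apply: mem; rewrite !inE eqxx orbT.
move=> ny; exists u1, u2; apply: contra ny => /eqP ->; by rewrite inE eqxx.
Qed.

Lemma adj_diff (F : finFieldType) k (Y : eqType) (f : 'rV[F]_k -> Y) a b :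
  f a != f b -> exists u1 u2, (hamming u1 u2 <= 1)%N /\ f u1 != f u2.
Proof.
move: {2}(hamming a b) (leqnn (hamming a b)) => n.
elim: n a b => [|n IH] a b hab fab.
  by exists a, b; split => //; apply: leq_trans hab _.
case: (leqP (hamming a b) 1) => h1; first by exists a, b.
have : (0 < hamming a b)%N by apply: leq_trans h1.
rewrite /hamming card_gt0 => /set0Pn [i]; rewrite inE => abi.
pose a' := \row_j (if j == i then b 0 j else a 0 j).
have haa : (hamming a a' <= 1)%N.
  rewrite /hamming; apply: leq_trans (_ : _ <= #|[set i]|)%N _; last by rewrite cards1.
  apply: subset_leq_card; apply/subsetP => j.
  rewrite !inE mxE; by case: (j == i) => //; rewrite eqxx.
have hab' : (hamming a' b <= n)%N.
  move: hab; rewrite /hamming (cardsD1 i) inE abi add1n ltnS; apply: leq_trans.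
  apply: subset_leq_card; apply/subsetP => j; rewrite !inE mxE.
  by case: (j == i) => //=; rewrite eqxx.
case: (eqVneq (f a) (f a')) => faa; last by exists a, a'.
by apply: (IH a' b hab'); rewrite -faa.
Qed.
Lemma hamming_const (F : finFieldType) (a b : F) :
  a != b -> hamming (const_mx a : 'rV[F]_1) (const_mx b) = 1%N.
Proof. by move=> ab; rewrite hamming_sum big_ord1 !mxE ab. Qed.

Theorem corollary10 (F : finFieldType) (k dd : nat) (Y : eqType)
  (f : 'rV[F]_k -> Y) :
  (2 <= size (@im_f F k Y f))%N ->
  (1 <= dd)%N ->
  @locally_binary F k Y f dd ->
  (exists (n : nat) (G : 'M[F]_(k, n)), @linear_MDS_code F n k dd G) ->
  @optimal_redundancy F k Y f dd dd.+1 dd.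
Proof.
move=> him; case: dd => [//|d] _ lb [n [G [[rfG [minG _]] En]]].
have {}En : n = (k + d)%N by move: En; rewrite addn1 addnS => -[].
subst n.
have cwd x y : x != y -> (d.+1 <= hamming (x *m G) (y *m G))%N.
  move=> xy; rewrite hamming_weight -mulmxBl; apply: minG; first exact: submxMl.
  apply: contra xy => /eqP h; rewrite -subr_eq0; apply/eqP.
  by apply: (row_free_inj rfG); rewrite h mul0mx.
pose phi (x : 'rV[F]_k) := lsubmx (x *m G).
have phi_inj : injective phi.
  move=> x y pxy; apply/eqP; apply: contraLR (leqnn 0) => xy.
  have := cwd x y xy.
  rewrite -(hsubmxK (x *m G)) -(hsubmxK (y *m G)) hamming_row_mx -/(phi x) -/(phi y) pxy.
  by rewrite hamming_xx add0n ltnNge hamming_le.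
have [g gK Kg] := injF_bij phi_inj.
pose cw u := g u *m G.
have lcw u : lsubmx (cw u) = u by exact: Kg.
pose e := [rel u v : 'rV[F]_k | (hamming u v <= d.+1)%N && (f u != f v)].
have esym : symmetric e by move=> u v; rewrite /= hamming_sym eq_sym.
have ediff u v : e u v -> f u != f v by case/andP.
have inball v u : (hamming v u <= d.+1)%N -> f u \in ball_f f v d.+1.
  by move=> h; rewrite mem_undup; apply: map_f; rewrite mem_enum inE.
have enb v u w : e v u -> e v w -> f u = f w.
  move=> /andP [hu fu] /andP [hw fw]; apply/eqP; apply/negPn/negP => fuw.
  have := lb v; apply/negP; rewrite -ltnNge.
  apply: (@leq_trans (size [:: f v; f u; f w])) => //.
  apply: uniq_leq_size.
    by rewrite /= !inE negb_or fu fw fuw.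
  move=> y; rewrite !inE => /or3P [] /eqP ->; apply: inball => //.
  by rewrite hamming_xx.
pose col u : 'rV[F]_1 := const_mx (if bcol f e u then 1 else 0).
pose p u := (row_mx (col u) (rsubmx (cw u)) : 'rV[F]_d.+1).
have key u1 u2 : hamming (row_mx u1 (p u1)) (row_mx u2 (p u2)) =
   (hamming (cw u1) (cw u2) + hamming (col u1) (col u2))%N.
  rewrite (hamming_row_mx u1 u2 (p u1) (p u2)) /p (hamming_row_mx (col u1) (col u2)).
  have hc : hamming (cw u1) (cw u2) =
     (hamming u1 u2 + hamming (rsubmx (cw u1)) (rsubmx (cw u2)))%N.
    by rewrite -{1}(hsubmxK (cw u1)) -{1}(hsubmxK (cw u2)) hamming_row_mx !lcw.
  by rewrite hc -addnA (addnC (hamming (col u1) _)).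
have dist u1 u2 : u1 != u2 -> (d.+1 <= hamming (row_mx u1 (p u1)) (row_mx u2 (p u2)))%N.
  move=> u12; rewrite key; apply: leq_trans (leq_addr _ _); apply: cwd.
  by apply: contra u12 => /eqP /(can_inj Kg) ->.
split.
  exists p; split; first exact: dist.
  move=> u1 u2 fu.
  have u12 : u1 != u2 by apply: contra fu => /eqP ->.
  case: (leqP (hamming u1 u2) d.+1) => h.
    have euv : e u1 u2 by rewrite /= h fu.
    have cd := bcol_diff esym ediff enb euv.
    rewrite key hamming_const ?addn1 ?ltnS.
      apply: cwd; by apply: contra u12 => /eqP /(can_inj Kg) ->.
    by move: cd; case: (bcol f e u1); case: (bcol f e u2) => //= _; rewrite ?oner_neq0 // eq_sym oner_neq0.
  rewrite hamming_row_mx; exact: leq_trans h (leq_addr _ _).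
move=> r' [p' [_ hf]].
have [a [b ab]] := im_two him.
have [u1 [u2 [h1 f12]]] := adj_diff ab.
have := hf _ _ f12; rewrite hamming_row_mx => h.
have : (d.+2 <= 1 + r')%N by apply: leq_trans h _; apply: leq_add => //; exact: hamming_le.
by rewrite add1n.
Qed.
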